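(* Let $W$ be an $\epsilon$-spectral cluster of $G_0$ and let $A\subseteq V_0$ be closed in $G_0$ with $\mathrm{vol}_{G_0}(W\cap A)\ge\frac23\mathrm{vol}_{G_0}(W)$. Then $A$ dominates $W$, i.e. $\mathrm{vol}_{G_0}(W\cap A)>(1-3\epsilon)\mathrm{vol}_{G_0}(W)$.
   Context: Standing setting: $G_0=(V_0,E_0)$ is a finite simple undirected graph and $0<\epsilon\le 1/2000000$. For a graph $H$, $d_H(v)$ is the degree, $\mathrm{vol}_H(S)=\sum_{v\in S}d_H(v)$, $E(S,T)$ is the set of edges with one endpoint in $S$ and the other in $T$, $\partial_H S=E(S,V(H)\setminus S)$. For $V\subseteq V_0$, $G_0|V$ is the induced subgraph. An $\epsilon$-spectral cluster of $G_0$ is $W\subseteq V_0$ with $\mathrm{vol}_{G_0}(W)>0$, $|\partial_{G_0}W|\le\epsilon\,\mathrm{vol}_{G_0}(W)$, and for every $A\subseteq W$ with $r=\mathrm{vol}_{G_0}(A)/\mathrm{vol}_{G_0}(W)$, $|E(A,W\setminus A)|\ge(r(1-r)-\epsilon)\mathrm{vol}_{G_0}(W)$. A set $A\subseteq V(H)$ is closed in $H$ if no $v\in V(H)\setminus A$ with $d_H(v)>0$ has at least $\frac59 d_H(v)$ of its $H$-neighbors in $A$. A set $A\subseteq V_0$ dominates $W$ if $\mathrm{vol}_{G_0}(W\cap A)>(1-3\epsilon)\mathrm{vol}_{G_0}(W)$. *)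

(* Defs.v *)
From mathcomp Require Import all_boot all_order all_algebra.
Set Implicit Arguments. Unset Strict Implicit. Unset Printing Implicit Defensive.
Import Order.TTheory GRing.Theory Num.Theory.
Local Open Scope ring_scope.

Definition simple_graph (V : finType) (e : rel V) : Prop :=
  symmetric e /\ irreflexive e.

Section Graph.
Variables (V : finType) (e : rel V).

Definition nbhd (v : V) : {set V} := [set u | e v u].
Definition deg (v : V) : nat := #|nbhd v|.

Definition vol (S : {set V}) : nat := \sum_(v in S) deg v.

(* For disjoint S, T (the only case
   used) this is exactly the number of edges between S and T. *)
Definition cut (S T : {set V}) : nat :=
  #|[set p : V * V | (p.1 \in S) && (p.2 \in T) && e p.1 p.2]|.

Definition boundary (S : {set V}) : nat := cut S (~: S).

Definition spectral_cluster (eps : rat) (W : {set V}) : Prop :=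
  (0 < vol W)%N /\
  ((boundary W)%:R <= eps * (vol W)%:R :> rat) /\
  forall A : {set V}, A \subset W ->
    let r : rat := (vol A)%:R / (vol W)%:R in
    (r * (1 - r) - eps) * (vol W)%:R <= (cut A (W :\: A))%:R.

Definition closed_set (A : {set V}) : Prop :=
  forall v, v \notin A -> (0 < deg v)%N ->
    ~ ((5%:R / 9%:R) * (deg v)%:R <= (#|nbhd v :&: A|)%:R :> rat).

Definition dominates (eps : rat) (A W : {set V}) : Prop :=
  (1 - 3%:R * eps) * (vol W)%:R < (vol (W :&: A))%:R :> rat.

End Graph.

(* Main.v *)
Require Import Defs.
From mathcomp Require Import all_boot all_order all_algebra.
From mathcomp Require Import lra.
Import Order.TTheory GRing.Theory Num.Theory.
Local Open Scope ring_scope.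
Lemma auxK (K eps : rat) : 2000 <= K -> 0 < eps -> eps <= K^-1 -> eps <= 1/100.
Proof.
move=> K2 e0 e1.
have Kp : 0 < K by clear -K2; lra.
have H : eps * K <= 1.
  by rewrite -(mulVf (lt0r_neq0 Kp)) ler_pM2r.
have HH : eps * 2000 <= eps * K.
  apply: ler_wpM2l; [exact: ltW e0 | exact: K2].
have h2 : eps * 2000 <= 1 by exact: le_trans HH H.
clear -h2 e0.
lra.
Qed.

Lemma eps_small (eps : rat) : 0 < eps -> eps <= (2%:R * 10%:R ^+ 6)^-1 -> eps <= 1/100.
Proof.
move=> e0 e1; rewrite 3!exprS in e1.
set y := (_ ^+ 3) in e1.
have y1 : (1:rat) <= y by rewrite /y; apply: exprn_ege1; rewrite ler1n.
clearbody y.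
apply: (@auxK _ eps _ e0 e1).
clear -y1; lra.
Qed.

Lemma arith_r (r eps : rat) : 0 <= r -> r <= 1/3 -> 0 < eps -> eps <= 1/100 ->
  r * (1 - r) - eps <= 5/9 * r -> r < 3%:R * eps.
Proof.
move=> r0 r3 e0 e2 h.
have h1 : r * (1/3 - r) >= 0 by apply: mulr_ge0; [exact: r0 | clear -r3; lra].
have h2 : r <= 9 * eps by clear -h h1; nra.
have [->|rp] := eqVneq r 0; first by clear -e0; lra.
have rp' : 0 < r by rewrite lt0r rp.
have h3 : r * (1/9 - r) > 0 by apply: mulr_gt0; [exact: rp' | clear -h2 e2; lra].
clear -h h3.
nra.
Qed.

Lemma cut_sum (V : finType) (e : rel V) (S T : {set V}) :
  cut e S T = (\sum_(v in S) #|nbhd e v :&: T|)%N.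
Proof.
rewrite /cut -sum1_card.
under [RHS]eq_bigr => v _ do rewrite -sum1_card.
rewrite pair_big_dep /=.
apply: eq_bigl => -[x y] /=.
rewrite !inE /=.
by case: (x \in S); case: (y \in T); case: (e x y).
Qed.

Lemma vol_split (V : finType) (e : rel V) (W A : {set V}) :
  vol e W = (vol e (W :&: A) + vol e (W :\: A))%N.
Proof. by rewrite /vol (big_setID A). Qed.

Theorem mainTheorem4 (V : finType) (e : rel V) (eps : rat)
  (He : simple_graph e)
  (Heps0 : 0 < eps) (Heps1 : eps <= (2%:R * 10%:R ^+ 6)^-1)
  (W A : {set V})
  (HW : spectral_cluster e eps W)
  (HA : closed_set e A)
  (Hvol : (2%:R / 3%:R) * (vol e W)%:R <= (vol e (W :&: A))%:R :> rat) :
  dominates e eps A W.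
Proof.
have He2 := @eps_small eps Heps0 Heps1.
case: HW => w0 [_ Hcl].
set B := W :\: A.
have HB := Hcl B (subsetDl W A).
have WB : W :\: B = W :&: A.
  by apply/setP => v; rewrite !inE; case: (v \in A); case: (v \in W).
rewrite WB /= in HB.
have Hsplit := @vol_split V e W A.
have Hc : ((cut e B (W :&: A))%:R : rat) <= 5/9 * (vol e B)%:R.
  rewrite cut_sum natr_sum /vol natr_sum mulr_sumr.
  apply: ler_sum => v; rewrite inE => /andP [vA vW].
  have le1 : (#|nbhd e v :&: (W :&: A)| <= #|nbhd e v :&: A|)%N.
    by apply: subset_leq_card; apply: setIS; apply: subsetIr.
  have le2 : (#|nbhd e v :&: A| <= deg e v)%N.
    by apply: subset_leq_card; apply: subsetIl.
  case: (posnP (deg e v)) => [d0|dp].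
    have : (#|nbhd e v :&: (W :&: A)| = 0)%N.
      by apply/eqP; rewrite -leqn0 -d0 (leq_trans le1 le2).
    move=> ->; rewrite d0 mulr0; exact: lexx.
  have := HA v vA dp => /negP; rewrite -ltNge => lt.
  apply: le_trans (ltW lt); rewrite ler_nat; exact: le1.
move: Hvol HB Hc; rewrite /dominates Hsplit !natrD.
set a := ((vol e (W :&: A))%:R : rat).
set b := ((vol e B)%:R : rat).
set c := ((cut e B (W :&: A))%:R : rat).
have w0' : (0 : rat) < a + b by rewrite -natrD -Hsplit ltr0n; exact: w0.
have b0 : (0 : rat) <= b by rewrite ler0n.
move: w0'; set w := a + b => w0' Hvol HB Hc.
clearbody a b c.
set r := b / w.
have bE : b = r * w by rewrite /r (mulfVK (lt0r_neq0 w0')).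
have r0 : 0 <= r by rewrite /r (divr_ge0 b0 (ltW w0')).
have r3 : r <= 1/3.
  rewrite /r (ler_pdivrMr _ _ w0'). rewrite /w in Hvol *. clear -Hvol b0. lra.
have HB' : (r * (1 - r) - eps) * w <= c by rewrite /r; exact: HB.
clearbody r.
have Hr : r * (1 - r) - eps <= 5/9 * r.
  rewrite -(ler_pM2r w0'). apply: le_trans HB' _. rewrite -(mulrA (5/9)) -bE. exact: Hc.
have hr := @arith_r r eps r0 r3 Heps0 He2 Hr.
have H : r * w < 3%:R * eps * w by rewrite (ltr_pM2r w0').
rewrite -bE in H.
rewrite mulrBl mul1r.
move: (3%:R * eps * w) H => t H.
rewrite /w. clear -H. lra.
Qed.
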